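(* Let $M$ be a $\delta$-no-regret algorithm for the (non-contextual) multi-armed bandit problem, and suppose the buyer plays according to Algorithm 1 built from $M$ (described in the context). Let $q_{\min}=\min_i q_i$. Then every seller strategy, even an adaptive one, receives expected total revenue at most ${\sf Mye}(\mathcal D)T+\frac{m\delta}{q_{\min}}$.
   Context: Model: a single seller and a single buyer interact for $T$ rounds, one item for sale per round. The buyer's value distribution $\mathcal D$ has finite support $0\le v_1<\dots<v_m\le 1$ with $\Pr[v_i]=q_i>0$; each round the value $v(t)$ is drawn independently from $\mathcal D$ and is known only to the buyer. A seller strategy offers arms $0,1,\dots,K$ with bid labels $0=b_0<b_1<\dots<b_K\le 1$; at round $t$, arm $i$ has allocation probability $a_{i,t}\in[0,1]$ and price $p_{i,t}\in[0,a_{i,t}b_i]$; arm $0$ has $a_{0,t}=p_{0,t}=0$; for $i>j$ and all $t$, $a_{i,t}\ge a_{j,t}$ and $p_{i,t}\ge p_{j,t}$. Pulling arm $i$ at round $t$ gives the item with probability $a_{i,t}$ at price $p_{i,t}$; the buyer's utility with value $v$ is $v a_{i,t}-p_{i,t}$. An adaptive seller may choose $a_{i,t},p_{i,t}$ at round $t$ after seeing the history and even the buyer's distribution over arms in round $t$. Revenue is the expected total payment. ${\sf Mye}(\mathcal D)=\max_p p\Pr_{v\sim\mathcal D}[v\ge p]$. An algorithm is $\delta$-no-regret if its expected regret $\mathbb E[\max_i\sum_t r_{i,t}-\sum_t r_{I_t,t}]$ is at most $\delta$ against any reward sequence. Algorithm 1: run $m$ copies $M_1,\dots,M_m$ of $M$;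 $M_i$ learns over $K+i-1$ arms: $K$ ``bid arms'' corresponding to the seller's options $1,\dots,K$ (equivalently $0,\dots,K$) and $i-1$ ``value arms'' corresponding to $v_1,\dots,v_{i-1}$. In a round where the buyer's value is $v_i$, use $M_i$ to pick an arm; if it is a bid arm, play that option; if it is the value arm $v_j$, sample an arm from $M_j$ (without updating $M_j$), playing it if it is a bid arm and recursing if it is a value arm. Then update $M_i$ (only) with the realized utility of this round. *)

(* Defs.v *)
From HB Require Import structures.
From mathcomp Require Import all_boot all_order all_algebra.
Set Implicit Arguments. Unset Strict Implicit. Unset Printing Implicit Defensive.
Import Order.TTheory GRing.Theory Num.Theory.
Local Open Scope ring_scope.

Section Bandit.
Variable R : realFieldType.

Definition is_dist (n : nat) (d : 'I_n -> R) :=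
  (forall i, 0 <= d i) /\ \sum_(i < n) d i = 1.

(* A (randomized) bandit algorithm over n arms: given the observed history
   (arms pulled and rewards received), the distribution of the next arm. *)
Definition bandit_alg (n : nat) := seq ('I_n * R) -> 'I_n -> R.
Definition is_alg n (A : bandit_alg n) := forall h, is_dist (A h).

Definition maxr (s : seq R) := foldr Num.max (head 0 s) s.

Section Regret.
Variables (n : nat) (A : bandit_alg n) (S : Type).
(* adaptive (randomized) adversary: state s; rewards of all arms at state s
   are rew s; after the algorithm pulls arm i the next state is drawn from
   the finite distribution nxt s i (list of (probability, state)). *)
Variables (rew : S -> 'I_n -> R) (nxt : S -> 'I_n -> seq (R * S)).

(* expected value of  max_i (C_i + future rewards of i) - (G + future
   collected reward), over k remaining rounds. *)
Fixpoint exp_regret (k : nat) (s : S) (h : seq ('I_n * R)) (C : 'I_n -> R)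
    (G : R) : R :=
  match k with
  | 0 => maxr [seq C i | i <- enum 'I_n] - G
  | k'.+1 => \sum_(i < n) A h i *
       \sum_(ps <- nxt s i) ps.1 *
          exp_regret k' ps.2 (rcons h (i, rew s i))
             (fun j => C j + rew s j) (G + rew s i)
  end.
End Regret.

Definition no_regret (n T : nat) (A : bandit_alg n) (delta : R) : Prop :=
  forall (S : Type) (rew : S -> 'I_n -> R) (nxt : S -> 'I_n -> seq (R * S))
         (s0 : S),
    (forall s i, -1 <= rew s i <= 1) ->
    (forall s i, all (fun ps => 0 <= ps.1) (nxt s i) /\
                 \sum_(ps <- nxt s i) ps.1 = 1) ->
    exp_regret A rew nxt T s0 [::] (fun _ => 0) 0 <= delta.

(* One round of the auction: value index, menu (allocations, prices),
   arm chosen by the copy M_{value} (as a nat index), final bid arm played. *)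
Record rnd (m K : nat) := Rnd {
  r_val : 'I_m;
  r_alloc : 'I_K.+1 -> R;
  r_price : 'I_K.+1 -> R;
  r_arm : nat;
  r_bid : 'I_K.+1 }.

Definition valid_menu (K : nat) (b : 'I_K.+1 -> R)
    (mn : ('I_K.+1 -> R) * ('I_K.+1 -> R)) : Prop :=
  let a := mn.1 in let p := mn.2 in
  a ord0 = 0 /\ p ord0 = 0 /\
  (forall i, 0 <= a i <= 1) /\
  (forall i, 0 <= p i <= a i * b i) /\
  (forall i j : 'I_K.+1, (i < j)%N -> a j >= a i /\ p j >= p i).

Definition prob_ge (m : nat) (v q : 'I_m -> R) (p : R) : R :=
  \sum_(i < m | p <= v i) q i.

Definition is_Mye (m : nat) (v q : 'I_m -> R) (r : R) : Prop :=
  (exists p, r = p * prob_ge v q p) /\ (forall p, p * prob_ge v q p <= r).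

Definition is_min (m : nat) (q : 'I_m -> R) (r : R) : Prop :=
  (exists i, r = q i) /\ (forall i, r <= q i).

Section Auction.
Variables (m K : nat) (v q : 'I_m -> R) (M : forall n, bandit_alg n).
Variable sigma : seq (rnd m K) -> ('I_K.+1 -> R) * ('I_K.+1 -> R).

Definition util (r : rnd m K) : R :=
  v (r_val r) * r_alloc r (r_bid r) - r_price r (r_bid r).

(* History seen by copy M_i (0-based i): arms 0..K are the bid arms,
   arm K+1+j (j < i) is the value arm for v_j. *)
Definition copy_hist (i : nat) (h : seq (rnd m K)) : seq ('I_(K + i).+1 * R) :=
  [seq (inord (r_arm r), util r) | r <- h & (r_val r == i :> nat)].

Definition pi (h : seq (rnd m K)) (i x : nat) : R :=
  if (x < (K + i).+1)%N then M (copy_hist i h) (inord x) else 0.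

(* distributions over final bid arms when sampling from M_0, ..., M_{k-1}
   (recursing through value arms, without updating) *)
Fixpoint dists (h : seq (rnd m K)) (k : nat) : seq ('I_K.+1 -> R) :=
  match k with
  | 0 => [::]
  | k'.+1 => let ds := dists h k' in
      rcons ds (fun bb : 'I_K.+1 => pi h k' bb +
         \sum_(j < k') pi h k' (K.+1 + j)%N * nth (fun _ => 0) ds j bb)
  end.

(* probability that the final bid arm is bb given the copy chose arm x *)
Definition cond (h : seq (rnd m K)) (x : nat) (bb : 'I_K.+1) : R :=
  if (x < K.+1)%N then (x == bb :> nat)%:R
  else nth (fun _ => 0) (dists h m) (x - K.+1)%N bb.

Fixpoint exp_rev (k : nat) (h : seq (rnd m K)) : R :=
  match k with
  | 0 => 0
  | k'.+1 =>
      let a := (sigma h).1 in let p := (sigma h).2 in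
      \sum_(i < m) q i * \sum_(x < (K + i).+1) pi h i x *
        \sum_(bb < K.+1) cond h x bb *
          (p bb + exp_rev k' (rcons h (Rnd i a p x bb)))
  end.
End Auction.

End Bandit.

(* Main.v *)
Require Import Defs.
From HB Require Import structures.
From mathcomp Require Import all_boot all_order all_algebra.
From mathcomp Require Import ring lra zify.
Import Order.TTheory GRing.Theory Num.Theory.
Local Open Scope ring_scope.


Section Mye.
Variable R : realFieldType.

Lemma myer (m : nat) : forall (v q X W : nat -> R) (t mye : R), 0 <= t -> 0 <= mye ->
 (forall i, (i < m)%N -> 0 <= v i) -> (forall i, (i<m)%N -> 0 <= q i) ->
 (forall i, (i<m)%N -> X i <= t) -> (forall i, (i<m)%N -> 0 <= W i) ->
 (forall j i, (j < i)%N -> (i < m)%N -> W j + (v i - v j) * X j <= W i) ->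
 (forall k, (k < m)%N -> v k * \sum_(i < m | (k <= i)%N) q i <= mye) ->
 \sum_(i < m) q i * (v i * X i - W i) <= t * mye.
Proof.
elim: m => [|m IH] v q X W t mye t0 mye0 v0 q0 Xt W0 IC My.
  by rewrite big_ord0 mulr_ge0.
rewrite big_ord_recl /=.
have Mys : forall k, (k < m)%N ->
    v k.+1 * \sum_(i < m | (k <= i)%N) q i.+1 <= mye.
  move=> k km; have := My k.+1 km.
  rewrite big_mkcond big_ord_recl /= (big_mkcond (fun i : 'I_m => (k <= i)%N)).
  by rewrite add0r.
have My0 : v 0%N * (q 0%N + \sum_(i < m) q i.+1) <= mye.
  by have := My 0%N isT; rewrite big_mkcond big_ord_recl.
have Hv0 := v0 0%N isT; have Hq0 := q0 0%N isT; have HW0 := W0 0%N isT.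
have HX0 := Xt 0%N isT.
case: (ltrP (X 0%N) 0) => HX.
  have H1 : q 0%N * (v 0%N * X 0%N - W 0%N) <= 0.
    apply: mulr_ge0_le0 => //.
    have : v 0%N * X 0%N <= 0 by apply: mulr_ge0_le0 => //; exact: ltW.
    lra.
  have := IH (fun i => v i.+1) (fun i => q i.+1) (fun i => X i.+1)
     (fun i => W i.+1) t mye t0 mye0 (fun i h => v0 i.+1 h) (fun i h => q0 i.+1 h)
     (fun i h => Xt i.+1 h) (fun i h => W0 i.+1 h)
     (fun j i h1 h2 => IC j.+1 i.+1 h1 h2) Mys.
  lra.
have := IH (fun i => v i.+1) (fun i => q i.+1) (fun i => X i.+1 - X 0%N)
   (fun i => W i.+1 - (v i.+1 - v 0%N) * X 0%N) (t - X 0%N) mye.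
have Ht : 0 <= t - X 0%N by lra.
move=> /(_ Ht mye0 (fun i h => v0 i.+1 h) (fun i h => q0 i.+1 h)) H.
have {H} := H _ _ _ Mys.
have -> : \sum_(i < m) q i.+1 * (v i.+1 * X i.+1 - W i.+1) =
  \sum_(i < m) q i.+1 * (v i.+1 * (X i.+1 - X 0%N) - (W i.+1 - (v i.+1 - v 0%N) * X 0%N))
  + (\sum_(i < m) q i.+1) * (v 0%N * X 0%N).
  rewrite mulr_suml -big_split /=; apply: eq_bigr => i _; ring.
move=> H.
have : \sum_(i < m) q i.+1 * (v i.+1 * (X i.+1 - X 0%N) - (W i.+1 - (v i.+1 - v 0%N) * X 0%N)) <= (t - X 0%N) * mye.
  apply: H.
  - move=> i h; have := Xt i.+1 h; lra.
  - move=> i h; have := IC 0%N i.+1 isT h; lra.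
  - move=> j i h1 h2; have := IC j.+1 i.+1 h1 h2.
    move=> h; rewrite -subr_le0; set e := (X in X <= 0).
    have -> : e = W j.+1 + (v i.+1 - v j.+1) * X j.+1 - W i.+1 by rewrite /e; ring.
    by rewrite subr_le0.
move=> H2.
have H3 : X 0%N * (v 0%N * (q 0%N + \sum_(i < m) q i.+1)) <= X 0%N * mye.
  by apply: ler_wpM2l.
have H4 : q 0%N * (v 0%N * X 0%N - W 0%N) <= q 0%N * (v 0%N * X 0%N).
  apply: ler_wpM2l => //; lra.
have E : X 0%N * (v 0%N * (q 0%N + \sum_(i < m) q i.+1)) =
   q 0%N * (v 0%N * X 0%N) + (\sum_(i < m) q i.+1) * (v 0%N * X 0%N) by ring.
have E2 : t * mye = X 0%N * mye + (t - X 0%N) * mye by ring.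
lra.
Qed.
End Mye.
Section Lists.
Variable R : realFieldType.

Definition Ex {A : Type} (l : seq (R * A)) (F : A -> R) : R :=
  \sum_(ps <- l) ps.1 * F ps.2.
Definition wsum {A : Type} (l : seq (R * A)) : R := \sum_(ps <- l) ps.1.
Definition nn {A : Type} (l : seq (R * A)) : bool := all (fun ps => 0 <= ps.1) l.
Definition scl {A : Type} (c : R) (l : seq (R * A)) := [seq (c * ps.1, ps.2) | ps <- l].
Definition sumd {I : finType} {A : Type} (w : I -> R) (f : I -> seq (R * A)) :
  seq (R * A) := flatten [seq scl (w i) (f i) | i <- enum I].

Lemma wsum_Ex {A} (l : seq (R * A)) : wsum l = Ex l (fun _ => 1).
Proof. by apply: eq_bigr => ps _; rewrite mulr1. Qed.

Lemma Ex_scl {A} c (l : seq (R * A)) F : Ex (scl c l) F = c * Ex l F.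
Proof. by rewrite /Ex big_map mulr_sumr; apply: eq_bigr => ps _ /=; rewrite mulrA. Qed.

Lemma Ex_sumd {I : finType} {A} (w : I -> R) (f : I -> seq (R * A)) F :
  Ex (sumd w f) F = \sum_i w i * Ex (f i) F.
Proof.
rewrite /Ex /sumd big_flatten /= big_map big_enum /=.
by apply: eq_bigr => i _; rewrite -/(Ex _ _) Ex_scl.
Qed.

Lemma Ex1 {A} a (x : A) F : Ex [:: (a, x)] F = a * F x.
Proof. by rewrite /Ex big_seq1. Qed.

Lemma Ex_add {A} (l : seq (R * A)) F G :
  Ex l (fun a => F a + G a) = Ex l F + Ex l G.
Proof. by rewrite /Ex -big_split; apply: eq_bigr => ps _; rewrite mulrDr. Qed.

Lemma Ex_const {A} (l : seq (R * A)) c : Ex l (fun _ => c) = c * wsum l.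
Proof. by rewrite /Ex /wsum mulr_sumr; apply: eq_bigr => ps _; rewrite mulrC. Qed.

Lemma Ex_ext {A} (l : seq (R * A)) F G : (forall a, F a = G a) -> Ex l F = Ex l G.
Proof. by move=> E; apply: eq_bigr => ps _; rewrite E. Qed.

Lemma Ex_le {A} (l : seq (R * A)) F G : nn l -> (forall a, F a <= G a) -> Ex l F <= Ex l G.
Proof.
move=> nnl E; rewrite /Ex; elim: l nnl => [|ps l IH] /=; first by rewrite !big_nil.
move=> /andP [p0 nnl]; rewrite !big_cons; apply: lerD; last exact: IH.
by apply: ler_wpM2l.
Qed.

Lemma nn_sumd {I : finType} {A} (w : I -> R) (f : I -> seq (R * A)) :
  (forall i, 0 <= w i) -> (forall i, nn (f i)) -> nn (sumd w f).
Proof.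
move=> w0 fn; rewrite /sumd.
have nnf : forall ls : seq (seq (R * A)), all nn ls -> nn (flatten ls).
  by elim=> //= l ls IH /andP [h1 h2]; rewrite /nn all_cat; apply/andP; split=> //; apply: IH.
apply: nnf; rewrite all_map; apply/allP => i _ /=.
rewrite /nn /scl all_map; move: (fn i); rewrite /nn.
elim: (f i) => //= ps l IH /andP [h1 h2]; rewrite IH // andbT.
exact: mulr_ge0.
Qed.

Lemma wsum_sumd {I : finType} {A} (w : I -> R) (f : I -> seq (R * A)) :
  wsum (sumd w f) = \sum_i w i * wsum (f i).
Proof. by rewrite wsum_Ex Ex_sumd; apply: eq_bigr => i _; rewrite wsum_Ex. Qed.
End Lists.
Arguments Ex {R A}. Arguments wsum {R A}. Arguments nn {R A}. Arguments scl {R A}.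
Arguments sumd {R I A}.

Lemma maxr_ge (R : realFieldType) (s : seq R) x : x \in s -> x <= maxr s.
Proof.
rewrite /maxr; elim: s (head 0 s) => // z s IH a; rewrite in_cons /=.
case/orP => [/eqP ->|xs]; rewrite le_max; first by rewrite lexx.
by rewrite IH ?orbT.
Qed.

Section Dreg.
Variables (R : realFieldType) (n : nat) (A : bandit_alg R n) (S : Type)
  (rew : S -> 'I_n -> R) (nxt : S -> 'I_n -> seq (R * S)) (y : 'I_n).
Hypothesis HA : is_alg A.
Hypothesis Hn : forall s x, nn (nxt s x) /\ wsum (nxt s x) = 1.

Fixpoint Dreg k s h : R :=
  match k with
  | 0 => 0
  | k'.+1 => \sum_(x < n) A h x * Ex (nxt s x)
       (fun s' => rew s y - rew s x + Dreg k' s' (rcons h (x, rew s x)))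
  end.

Lemma regret_ge k s h C G :
  C y - G + Dreg k s h <= exp_regret A rew nxt k s h C G.
Proof.
elim: k s h C G => [|k IH] s h C G /=.
  rewrite addr0 lerB // maxr_ge //; apply: map_f; by rewrite mem_enum.
have [_ HA1] := HA h.
rewrite -[C y - G]mulr1 -HA1 mulr_sumr -big_split /=; apply: ler_sum => x _.
have [nnx wx] := Hn s x.
rewrite -[C y - G]mulr1 -wx -Ex_const mulrC -mulrDr; apply: ler_wpM2l.
  exact: ((HA h).1 x).
rewrite -Ex_add.
apply: (@Ex_le _ _ _ _ (fun s' => exp_regret A rew nxt k s' (rcons h (x, rew s x))
   (fun j => C j + rew s j) (G + rew s x))) => // s'.
have := IH s' (rcons h (x, rew s x)) (fun j => C j + rew s j) (G + rew s x).
move=> H; apply: le_trans H; lra.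
Qed.
End Dreg.
Arguments Dreg {R n} A {S} rew nxt y k s h.
Section Gen.
Variables (R : realFieldType) (m K : nat) (v q : 'I_m -> R)
  (M : forall n, bandit_alg R n)
  (sigma : seq (rnd R m K) -> ('I_K.+1 -> R) * ('I_K.+1 -> R)).
Hypothesis HM : forall i, (i < m)%N -> is_alg (M (K + i).+1).
Hypothesis Hq0 : forall i, 0 <= q i.
Hypothesis Hq1 : \sum_(i < m) q i = 1.

Implicit Types (h gh : seq (rnd R m K)).
Local Notation P := (Defs.pi v M).
Local Notation cnd := (cond v M).

Definition d0 : 'I_K.+1 -> R := fun _ => 0.
Definition Dn h j := nth d0 (dists v M h m) j.
Definition Dnew h (j : nat) : 'I_K.+1 -> R := fun bb => P h j bb +
  \sum_(j' < j) P h j (K.+1 + j')%N * nth d0 (dists v M h j) j' bb.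

Lemma size_dists h k : size (dists v M h k) = k.
Proof. by elim: k => //= k IH; rewrite size_rcons IH. Qed.

Lemma nth_dists h k j : (j < k)%N -> nth d0 (dists v M h k) j = Dnew h j.
Proof.
elim: k => // k IH jk; rewrite /= nth_rcons size_dists.
case: ltnP => h1; first exact: IH.
have -> : j = k by apply/eqP; rewrite eqn_leq h1 -ltnS jk.
by rewrite eqxx.
Qed.

Lemma Dn_rec h j bb : (j < m)%N ->
  Dn h j bb = P h j bb + \sum_(j' < j) P h j (K.+1 + j')%N * Dn h j' bb.
Proof.
move=> jm; rewrite /Dn nth_dists // /Dnew; congr (_ + _).
apply: eq_bigr => j' _; congr (_ * _).
rewrite nth_dists // nth_dists //; exact: ltn_trans (ltn_ord j') jm.
Qed.

Lemma P_ge0 h i x : (i < m)%N -> 0 <= P h i x.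
Proof.
move=> im; rewrite /Defs.pi; case: ifP => _ //.
by have [H1 _] := HM i im (copy_hist v i h); apply: H1.
Qed.

Lemma P_sum h i : (i < m)%N -> \sum_(x < (K + i).+1) P h i x = 1.
Proof.
move=> im; have [_ H1] := HM i im (copy_hist v i h).
rewrite -H1; apply: eq_bigr => x _; by rewrite /Defs.pi ltn_ord inord_val.
Qed.

Lemma Dn_prop h j : (j < m)%N -> (forall bb, 0 <= Dn h j bb) /\ \sum_bb Dn h j bb = 1.
Proof.
elim/ltn_ind: j => j IH jm; split.
  move=> bb; rewrite Dn_rec //; apply: addr_ge0; first exact: P_ge0.
  apply: sumr_ge0 => j' _; apply: mulr_ge0; first exact: P_ge0.
  have j'j := ltn_ord j'; exact: ((IH j' j'j (ltn_trans j'j jm)).1 bb).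
under eq_bigr do rewrite Dn_rec //.
rewrite big_split /= exchange_big /=.
under [X in _ + X = _]eq_bigr do rewrite -mulr_sumr.
have -> : \sum_(i < j) P h j (K.+1 + i)%N * (\sum_(i0 < K.+1) Dn h i i0)
  = \sum_(i < j) P h j (K.+1 + i)%N.
  apply: eq_bigr => j' _; have j'j := ltn_ord j'.
  by rewrite (IH j' j'j (ltn_trans j'j jm)).2 mulr1.
rewrite -(P_sum h j jm).
have -> : (K + j).+1 = (K.+1 + j)%N by [].
by rewrite big_split_ord.
Qed.

Lemma cond_ge0 h x bb : (x < K.+1 + m)%N -> 0 <= cnd h x bb.
Proof.
move=> xm; rewrite /cond; case: ifP => xK; first by rewrite ler0n.
have xm' : (x - K.+1 < m)%N by rewrite ltn_subLR // leqNgt xK.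
exact: ((Dn_prop h (x - K.+1) xm').1 bb).
Qed.

Lemma cond_sum h x : (x < K.+1 + m)%N -> \sum_bb cnd h x bb = 1.
Proof.
move=> xm; rewrite /cond; case xK: (x < K.+1)%N.
  rewrite (bigD1 (Ordinal xK)) //= eqxx big1 ?addr0 // => i.
  by rewrite -val_eqE /= eq_sym => /negPf ->.
have xm' : (x - K.+1 < m)%N by rewrite ltn_subLR // leqNgt xK.
exact: ((Dn_prop h (x - K.+1) xm').2).
Qed.

Lemma cond_val h j bb : cnd h (K.+1 + j)%N bb = Dn h j bb.
Proof. by rewrite /cond ltnNge leq_addr /= addKn. Qed.

Lemma cond_bid h (x : 'I_K.+1) bb : cnd h x bb = (x == bb)%:R.
Proof. by rewrite /cond ltn_ord. Qed.

Lemma Dist_eq h i bb : (i < m)%N ->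
  \sum_(x < (K + i).+1) P h i x * cnd h x bb = Dn h i bb.
Proof.
move=> im; rewrite Dn_rec //.
have -> : (K + i).+1 = (K.+1 + i)%N by [].
rewrite big_split_ord /=; congr (_ + _).
  rewrite (bigD1 bb) //= cond_bid eqxx mulr1 big1 ?addr0 // => x.
  by rewrite cond_bid => /negPf ->; rewrite mulr0.
by apply: eq_bigr => j _; rewrite cond_val.
Qed.

Definition avg h (Y : 'I_m -> nat -> 'I_K.+1 -> R) : R :=
  \sum_(i < m) q i * \sum_(x < (K + i).+1) P h i x *
     \sum_(bb < K.+1) cnd h x bb * Y i x bb.

Lemma avg_ext h Y1 Y2 : (forall i x bb, Y1 i x bb = Y2 i x bb) -> avg h Y1 = avg h Y2.
Proof.
move=> E; rewrite /avg; apply: eq_bigr => i _; congr (_ * _).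
apply: eq_bigr => x _; congr (_ * _); apply: eq_bigr => bb _; by rewrite E.
Qed.

Lemma avg_add h Y1 Y2 : avg h (fun i x bb => Y1 i x bb + Y2 i x bb) = avg h Y1 + avg h Y2.
Proof.
rewrite /avg -big_split; apply: eq_bigr => i _ /=; rewrite -mulrDr; congr (_ * _).
rewrite -big_split; apply: eq_bigr => x _ /=; rewrite -mulrDr; congr (_ * _).
rewrite -big_split; apply: eq_bigr => bb _ /=; by rewrite mulrDr.
Qed.

Lemma avg_scale h c Y : avg h (fun i x bb => c * Y i x bb) = c * avg h Y.
Proof.
rewrite /avg mulr_sumr; apply: eq_bigr => i _; rewrite mulrCA; congr (_ * _).
rewrite mulr_sumr; apply: eq_bigr => x _; rewrite mulrCA; congr (_ * _).
rewrite mulr_sumr; apply: eq_bigr => bb _; by rewrite mulrCA.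
Qed.

Lemma avg_le h Y1 Y2 : (forall i x bb, Y1 i x bb <= Y2 i x bb) -> avg h Y1 <= avg h Y2.
Proof.
move=> E; rewrite /avg; apply: ler_sum => i _; apply: ler_wpM2l => //.
apply: ler_sum => x _; apply: ler_wpM2l; first exact: P_ge0.
apply: ler_sum => bb _; apply: ler_wpM2l => //; apply: cond_ge0.
by have := ltn_ord x; have := ltn_ord i; lia.
Qed.

Lemma avg_const h c : avg h (fun _ _ _ => c) = c.
Proof.
rewrite /avg -[RHS]mul1r -Hq1 mulr_suml; apply: eq_bigr => i _; congr (_ * _).
rewrite -[RHS]mul1r -(P_sum h i (ltn_ord i)) mulr_suml; apply: eq_bigr => x _.
congr (_ * _); rewrite -mulr_suml cond_sum ?mul1r //.
by have := ltn_ord x; have := ltn_ord i; lia.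
Qed.

Lemma avg_bb h (i : 'I_m) (Z : 'I_K.+1 -> R) :
  \sum_(x < (K + i).+1) P h i x * \sum_(bb < K.+1) cnd h x bb * Z bb =
  \sum_bb Dn h i bb * Z bb.
Proof.
under eq_bigr do rewrite mulr_sumr.
rewrite exchange_big /=; apply: eq_bigr => bb _.
rewrite -(Dist_eq h i bb (ltn_ord i)) mulr_suml; apply: eq_bigr => x _; by rewrite mulrA.
Qed.

Definition nxh h (i : 'I_m) x bb := rcons h (Rnd i (sigma h).1 (sigma h).2 x bb).

Fixpoint EF (F : seq (rnd R m K) -> R) k h : R :=
  match k with
  | 0 => 0
  | k'.+1 => F h + avg h (fun i x bb => EF F k' (nxh h i x bb))
  end.

Fixpoint Eg (g : seq (rnd R m K) -> 'I_m -> nat -> 'I_K.+1 -> R) k h : R :=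
  match k with
  | 0 => 0
  | k'.+1 => avg h (fun i x bb => g h i x bb + Eg g k' (nxh h i x bb))
  end.

Lemma exp_rev_Eg k h : exp_rev v q M sigma k h = Eg (fun h _ _ bb => (sigma h).2 bb) k h.
Proof.
elim: k h => // k IH h /=; apply: eq_bigr => i _; congr (_ * _).
apply: eq_bigr => x _; congr (_ * _); apply: eq_bigr => bb _; by rewrite IH.
Qed.

Lemma EF_ext F G k h : (forall h, F h = G h) -> EF F k h = EF G k h.
Proof.
move=> E; elim: k h => // k IH h /=; rewrite E; congr (_ + _).
by apply: avg_ext => i x bb; rewrite IH.
Qed.

Lemma Eg_EF g k h : Eg g k h = EF (fun h => avg h (g h)) k h.
Proof.
elim: k h => // k IH h /=; rewrite avg_add; congr (_ + _).
by apply: avg_ext => i x bb; rewrite IH.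
Qed.

Lemma EF_add F G k h : EF (fun h => F h + G h) k h = EF F k h + EF G k h.
Proof.
elim: k h => [|k IH] h /=; first by rewrite addr0.
rewrite (avg_ext h _ _ (fun i x bb => IH _)) avg_add; lra.
Qed.

Lemma EF_scale c F k h : EF (fun h => c * F h) k h = c * EF F k h.
Proof.
elim: k h => [|k IH] h /=; first by rewrite mulr0.
by rewrite (avg_ext h _ _ (fun i x bb => IH _)) avg_scale mulrDr.
Qed.

Lemma EF_sum (I : eqType) (r : seq I) (c : I -> R) (F : I -> seq (rnd R m K) -> R) k h :
  EF (fun h => \sum_(j <- r) c j * F j h) k h = \sum_(j <- r) c j * EF (F j) k h.
Proof.
elim: r => [|j r IH].
  rewrite big_nil (EF_ext _ (fun h => 0 * 0)); last by move=> ?; rewrite big_nil mul0r.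
  by rewrite EF_scale mul0r.
rewrite big_cons (EF_ext _ (fun h => c j * F j h + \sum_(j <- r) c j * F j h)).
  by rewrite EF_add EF_scale IH.
by move=> ?; rewrite big_cons.
Qed.

Lemma EF_le F c k h : (forall h, F h <= c) -> EF F k h <= k%:R * c.
Proof.
move=> Fc; elim: k h => [|k IH] h /=; first by rewrite mul0r.
rewrite -nat1r mulrDl mul1r; apply: lerD => //.
by rewrite -(avg_const h (k%:R * c)); apply: avg_le.
Qed.

Section Adv.
Variables (i0 : 'I_m) (y : 'I_(K + i0).+1).
Local Notation n := (K + i0).+1.
Definition St := (seq (rnd R m K) * nat * {ffun 'I_n -> 'I_K.+1})%type.
Definition ua h (bb : 'I_K.+1) : R := v i0 * (sigma h).1 bb - (sigma h).2 bb.
Definition rewA (s : St) (x : 'I_n) : R := if s.1.2 is 0 then 0 else ua s.1.1 (s.2 x).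
Definition wf h (f : {ffun 'I_n -> 'I_K.+1}) : R := \prod_(z : 'I_n) cnd h z (f z).
Definition presample h r : seq (R * St) := sumd (wf h) (fun f => [:: (1, (h, r, f))]).
Fixpoint advance h r : seq (R * St) :=
  match r with
  | 0 => presample h 0
  | r'.+1 => sumd q (fun i => if i == i0 then presample h r else
       sumd (fun x : 'I_(K + i).+1 => P h i x) (fun x =>
         sumd (fun bb => cnd h x bb) (fun bb => advance (nxh h i x bb) r')))
  end.
Definition nxtA (s : St) (x : 'I_n) : seq (R * St) :=
  if s.1.2 is r'.+1 then advance (nxh s.1.1 i0 x (s.2 x)) r' else [:: (1, s)].
Definition gy h (i : 'I_m) (x : nat) (bb : 'I_K.+1) : R :=
  if i == i0 then \sum_bb' cnd h y bb' * ua h bb' - ua h bb else 0.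

Lemma z_lt (z : 'I_n) : (z < K.+1 + m)%N.
Proof. by have := ltn_ord z; have := ltn_ord i0; lia. Qed.

Lemma wf_marg h (z : 'I_n) (phi : 'I_K.+1 -> R) :
  \sum_f wf h f * phi (f z) = \sum_bb cnd h z bb * phi bb.
Proof.
pose c' (z' : 'I_n) bb := if z' == z then cnd h z' bb * phi bb else cnd h z' bb.
have E : forall f : {ffun 'I_n -> 'I_K.+1}, wf h f * phi (f z) = \prod_z' c' z' (f z').
  move=> f; rewrite /wf (bigD1 z) //= [in RHS](bigD1 z) //= /c' eqxx.
  rewrite mulrAC; congr (_ * _).
  by rewrite [RHS](eq_bigr (fun i : 'I_n => cnd h i (f i))) // => z' /negPf ->.
under eq_bigr do rewrite E.
rewrite -(bigA_distr_bigA (fun z' bb => c' z' bb)) /= (bigD1 z) //= [X in _ * X]big1 ?mulr1.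
  by apply: eq_bigr => bb _; rewrite /c' eqxx.
by move=> z' /negPf ne; rewrite /c' ne cond_sum // z_lt.
Qed.

Lemma wf_ge0 h f : 0 <= wf h f.
Proof. by apply: prodr_ge0 => z _; apply: cond_ge0; exact: z_lt. Qed.

Lemma wf_sum h : \sum_f wf h f = 1.
Proof.
have := wf_marg h ord0 (fun _ => 1).
under eq_bigr do rewrite mulr1.
move=> ->; under eq_bigr do rewrite mulr1; by rewrite cond_sum // z_lt.
Qed.

Lemma Ex_presample h r F : Ex (presample h r) F = \sum_f wf h f * F (h, r, f).
Proof. by rewrite Ex_sumd; apply: eq_bigr => f _; rewrite Ex1 mul1r. Qed.

Lemma presample_ok h r : nn (presample h r) /\ wsum (presample h r) = 1.
Proof.
split; first by apply: nn_sumd => [f|f]; [exact: wf_ge0|rewrite /nn /= ler01].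
rewrite wsum_Ex Ex_presample -[RHS](wf_sum h); apply: eq_bigr => f _; by rewrite mulr1.
Qed.

Lemma advance_ok r : forall h, nn (advance h r) /\ wsum (advance h r) = 1.
Proof.
elim: r => [|r IH] h; first exact: presample_ok.
have okx : forall i : 'I_m, i != i0 -> nn (sumd (fun x : 'I_(K + i).+1 => P h i x) (fun x =>
         sumd (fun bb => cnd h x bb) (fun bb => advance (nxh h i x bb) r))) /\
     wsum (sumd (fun x : 'I_(K + i).+1 => P h i x) (fun x =>
         sumd (fun bb => cnd h x bb) (fun bb => advance (nxh h i x bb) r))) = 1.
  move=> i _; split.
    apply: nn_sumd => x; first exact: P_ge0.
    apply: nn_sumd => bb; last exact: (IH _).1.
    by apply: cond_ge0; have := ltn_ord x; have := ltn_ord i; lia.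
  rewrite wsum_sumd -(P_sum h i (ltn_ord i)); apply: eq_bigr => x _.
  rewrite wsum_sumd (eq_bigr (fun bb => cnd h x bb)); last first.
    by move=> bb _; rewrite (IH _).2 mulr1.
  rewrite cond_sum ?mulr1 //; have := ltn_ord x; have := ltn_ord i; lia.
split.
  apply: nn_sumd => // i; case: eqP => [_|/eqP ne]; first exact: (presample_ok _ _).1.
  exact: (okx i ne).1.
rewrite /= wsum_sumd -Hq1; apply: eq_bigr => i _; case: eqP => [_|/eqP ne].
  by rewrite (presample_ok _ _).2 mulr1.
by rewrite (okx i ne).2 mulr1.
Qed.

Lemma nxtA_ok s x : nn (nxtA s x) /\ wsum (nxtA s x) = 1.
Proof.
rewrite /nxtA; case: s.1.2 => [|r]; last exact: advance_ok.
by rewrite /nn /wsum /= ler01 big_seq1.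
Qed.

Local Notation A := (M n).

Lemma Dreg_term k s (hh : seq ('I_n * R)) : s.1.2 = 0%N -> Dreg A rewA nxtA y k s hh = 0.
Proof.
move=> s0; elim: k hh => // k IH hh /=; apply: big1 => x _.
rewrite /nxtA /rewA s0 Ex1 IH; lra.
Qed.

Lemma copy_hist_ne gh (i : 'I_m) a p x bb : i != i0 ->
  copy_hist v i0 (rcons gh (Rnd i a p x bb)) = copy_hist v i0 gh.
Proof.
move=> ne; rewrite /copy_hist filter_rcons /=.
by have -> : (i == i0 :> nat) = false by apply/negP => /eqP /val_inj /eqP; apply/negP.
Qed.

Lemma copy_hist_eq gh a p (x : 'I_n) bb :
  copy_hist v i0 (rcons gh (Rnd i0 a p x bb)) =
  rcons (copy_hist v i0 gh) (x, v i0 * a bb - p bb).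
Proof. by rewrite /copy_hist filter_rcons /= eqxx map_rcons /= inord_val. Qed.

Lemma A_P gh (x : 'I_n) : A (copy_hist v i0 gh) x = P gh i0 x.
Proof. by rewrite /Defs.pi ltn_ord inord_val. Qed.

Lemma advance_rel r : forall gh k, (r <= k)%N ->
  Ex (advance gh r) (fun s => Dreg A rewA nxtA y k s (copy_hist v i0 gh)) = Eg gy r gh.
Proof.
elim: r => [|r IH] gh k rk.
  rewrite /= Ex_presample; apply: big1 => f _; by rewrite Dreg_term // mulr0.
case: k rk => // k rk.
rewrite /= Ex_sumd /avg; apply: eq_bigr => i _; congr (q i * _).
case: eqP => [Ei|ne]; last first.
  rewrite Ex_sumd; apply: eq_bigr => x _; congr (_ * _).
  rewrite Ex_sumd; apply: eq_bigr => bb _; congr (_ * _).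
  rewrite /gy (introF eqP ne) add0r -(IH _ k.+1 (ltnW rk)); apply: Ex_ext => s.
  by rewrite /nxh copy_hist_ne //; apply/eqP.
subst i.
rewrite Ex_presample.
have E1 : forall f x, Ex (nxtA (gh, r.+1, f) x) (fun s' =>
     rewA (gh, r.+1, f) y - rewA (gh, r.+1, f) x +
     Dreg A rewA nxtA y k s' (rcons (copy_hist v i0 gh) (x, rewA (gh, r.+1, f) x)))
   = ua gh (f y) - ua gh (f x) + Eg gy r (nxh gh i0 x (f x)).
  move=> f x; rewrite /nxtA /= Ex_add Ex_const (advance_ok _ _).2 mulr1.
  congr (_ + _); rewrite -(IH _ k rk); apply: Ex_ext => s'.
  by rewrite /nxh copy_hist_eq.
have E2 : forall f, Dreg A rewA nxtA y k.+1 (gh, r.+1, f) (copy_hist v i0 gh) =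
   \sum_(x : 'I_n) P gh i0 x * (ua gh (f y) - ua gh (f x) + Eg gy r (nxh gh i0 x (f x))).
  move=> f; rewrite [LHS]/=; apply: eq_bigr => x _; by rewrite A_P E1.
rewrite (eq_bigr (fun f => wf gh f * \sum_(x : 'I_n) P gh i0 x *
   (ua gh (f y) - ua gh (f x) + Eg gy r (nxh gh i0 x (f x))))); last first.
  by move=> f _; congr (_ * _); exact: E2 f.
under eq_bigr do rewrite mulr_sumr.
rewrite exchange_big /=; apply: eq_bigr => x _.
under eq_bigr do rewrite mulrCA.
rewrite -mulr_sumr; congr (_ * _).
have E3 : forall f : {ffun 'I_n -> 'I_K.+1}, wf gh f * (ua gh (f y) - ua gh (f x) + Eg gy r (nxh gh i0 x (f x)))
  = wf gh f * ua gh (f y) + wf gh f * (Eg gy r (nxh gh i0 x (f x)) - ua gh (f x)).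
  by move=> f; ring.
rewrite (eq_bigr _ (fun f _ => E3 f)).
rewrite big_split /= (wf_marg gh y (ua gh)) (wf_marg gh x (fun bb => Eg gy r (nxh gh i0 x bb) - ua gh bb)).
rewrite /gy eqxx.
have E4 : forall bb, cnd gh x bb * (\sum_bb' cnd gh y bb' * ua gh bb' - ua gh bb + Eg gy r (nxh gh i0 x bb))
  = (\sum_bb' cnd gh y bb' * ua gh bb') * cnd gh x bb + cnd gh x bb * (Eg gy r (nxh gh i0 x bb) - ua gh bb).
  by move=> bb; ring.
under [RHS]eq_bigr do rewrite E4.
by rewrite big_split /= -mulr_sumr cond_sum ?mulr1 // z_lt.
Qed.

Lemma rewA_bound (b : 'I_K.+1 -> R) : (forall i, 0 <= v i <= 1) -> (forall i, b i <= 1) ->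
  (forall h, valid_menu b (sigma h)) -> forall s x, -1 <= rewA s x <= 1.
Proof.
move=> Hv Hb Hs s x; rewrite /rewA; case: s.1.2 => [|r]; first by rewrite lerN10 ler01.
rewrite /ua; set bb := s.2 x; set gh := s.1.1.
have [_ [_ [Ha [Hp _]]]] := Hs gh.
have /andP [a0 a1] := Ha bb; have /andP [p0 p1] := Hp bb.
have /andP [v0 v1] := Hv i0; have b1 := Hb bb.
have H1 : v i0 * (sigma gh).1 bb <= (sigma gh).1 bb by rewrite ler_piMl.
have H2 : (sigma gh).1 bb * b bb <= (sigma gh).1 bb by rewrite ler_piMr.
have H3 : 0 <= v i0 * (sigma gh).1 bb by apply: mulr_ge0.
apply/andP; split; lra.
Qed.

Lemma regret_conc T delta (b : 'I_K.+1 -> R) : no_regret T A delta ->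
  (forall i, 0 <= v i <= 1) -> (forall i, b i <= 1) ->
  (forall h, valid_menu b (sigma h)) -> Eg gy T [::] <= delta.
Proof.
move=> NR Hv Hb Hs.
have NRs := NR St rewA nxtA _ (rewA_bound b Hv Hb Hs) nxtA_ok.
rewrite -(advance_rel T [::] T (leqnn T)) /=.
apply: (@le_trans _ _ (Ex (advance [::] T) (fun s => exp_regret A rewA nxtA T s [::] (fun _ => 0) 0))).
  apply: Ex_le; first exact: (advance_ok _ _).1.
  move=> s; have := @regret_ge _ _ _ _ _ _ y (HM i0 (ltn_ord i0)) nxtA_ok T s [::] (fun _ => 0) 0.
  by move/(_ rewA); rewrite subr0 add0r.
apply: (@le_trans _ _ (Ex (advance [::] T) (fun _ => delta))).
  apply: Ex_le; first exact: (advance_ok _ _).1.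
  by move=> s; apply: NRs.
by rewrite Ex_const (advance_ok _ _).2 mulr1.
Qed.
End Adv.

Definition xa h (j : nat) := \sum_bb Dn h j bb * (sigma h).1 bb.
Definition pp h (j : nat) := \sum_bb Dn h j bb * (sigma h).2 bb.

Lemma avg_gy (i0 : 'I_m) (y : 'I_(K + i0).+1) h :
  avg h (gy i0 y h) = q i0 * (\sum_bb' cnd h y bb' * ua i0 h bb' - (v i0 * xa h i0 - pp h i0)).
Proof.
rewrite /avg (bigD1 i0) //= [X in _ + X]big1 ?addr0; last first.
  move=> i ne; rewrite /gy (negPf ne).
  by rewrite big1 ?mulr0 // => x _; rewrite big1 ?mulr0 // => bb _; rewrite mulr0.
congr (_ * _); rewrite /gy eqxx avg_bb.
have E : forall bb, Dn h i0 bb * (\sum_bb' cnd h y bb' * ua i0 h bb' - ua i0 h bb) =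
   (\sum_bb' cnd h y bb' * ua i0 h bb') * Dn h i0 bb - (v i0 * (Dn h i0 bb * (sigma h).1 bb)
    - Dn h i0 bb * (sigma h).2 bb).
  by move=> bb; rewrite /ua; ring.
rewrite (eq_bigr _ (fun bb _ => E bb)) sumrB -mulr_sumr (Dn_prop h i0 (ltn_ord i0)).2 mulr1.
by rewrite sumrB -mulr_sumr.
Qed.

Lemma cy_val (i0 : 'I_m) j (jl : (K.+1 + j < (K + i0).+1)%N) h :
  \sum_bb' cnd h (Ordinal jl) bb' * ua i0 h bb' = v i0 * xa h j - pp h j.
Proof.
under eq_bigr do rewrite /= cond_val /ua.
rewrite /xa /pp mulr_sumr -sumrB; apply: eq_bigr => bb _; ring.
Qed.

Lemma cy_zero (b : 'I_K.+1 -> R) (i0 : 'I_m) (zl : (0 < (K + i0).+1)%N) h :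
  valid_menu b (sigma h) -> \sum_bb' cnd h (Ordinal zl) bb' * ua i0 h bb' = 0.
Proof.
move=> [a0 [p0 _]].
rewrite (bigD1 ord0) //= big1 ?addr0.
  by rewrite /cond /= mul1r /ua a0 p0 mulr0 subr0.
move=> bb ne; rewrite /cond /=.
have -> : (0 == bb :> nat) = false.
  by apply/negP => /eqP E; move: ne; rewrite (_ : bb = ord0) ?eqxx //; apply: val_inj.
by rewrite mul0r.
Qed.

Definition Xj T j := EF (fun h => xa h j) T [::].
Definition Pj T j := EF (fun h => pp h j) T [::].

Lemma ineq_a T delta (b : 'I_K.+1 -> R) (i0 : 'I_m) : no_regret T (M (K + i0).+1) delta ->
  (forall i, 0 <= v i <= 1) -> (forall i, b i <= 1) ->
  (forall h, valid_menu b (sigma h)) ->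
  q i0 * (Pj T i0 - v i0 * Xj T i0) <= delta.
Proof.
move=> NR Hv Hb Hs.
have zl : (0 < (K + i0).+1)%N by [].
have := regret_conc i0 (Ordinal zl) T delta b NR Hv Hb Hs.
rewrite Eg_EF (EF_ext _ (fun h => (- q i0 * v i0) * xa h i0 + q i0 * pp h i0)); last first.
  by move=> h; rewrite avg_gy (cy_zero b i0 zl h (Hs h)); ring.
by rewrite EF_add !EF_scale /Xj /Pj => H; apply: le_trans H; rewrite le_eqVlt; apply/orP; left; apply/eqP; ring.
Qed.

Lemma ineq_b T delta (b : 'I_K.+1 -> R) (i0 : 'I_m) j : (j < i0)%N ->
  no_regret T (M (K + i0).+1) delta ->
  (forall i, 0 <= v i <= 1) -> (forall i, b i <= 1) ->
  (forall h, valid_menu b (sigma h)) ->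
  q i0 * (v i0 * Xj T j - Pj T j - (v i0 * Xj T i0 - Pj T i0)) <= delta.
Proof.
move=> ji NR Hv Hb Hs.
have jl : (K.+1 + j < (K + i0).+1)%N by rewrite addSn ltnS ltn_add2l.
have := regret_conc i0 (Ordinal jl) T delta b NR Hv Hb Hs.
rewrite Eg_EF (EF_ext _ (fun h => (q i0 * v i0) * xa h j + ((- q i0) * pp h j +
   ((- q i0 * v i0) * xa h i0 + q i0 * pp h i0)))); last first.
  by move=> h; rewrite avg_gy cy_val; ring.
rewrite !EF_add !EF_scale /Xj /Pj => H; apply: le_trans H.
by rewrite le_eqVlt; apply/orP; left; apply/eqP; ring.
Qed.


Lemma exp_rev_sum T : exp_rev v q M sigma T [::] = \sum_(i < m) q i * Pj T i.
Proof.
rewrite exp_rev_Eg Eg_EF (EF_ext _ (fun h => \sum_(i < m) q i * pp h i)).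
  by rewrite EF_sum.
move=> h; rewrite /avg; apply: eq_bigr => i _; congr (_ * _).
by rewrite avg_bb.
Qed.

Lemma Xj_le T (b : 'I_K.+1 -> R) j : (j < m)%N -> (forall h, valid_menu b (sigma h)) ->
  Xj T j <= T%:R.
Proof.
move=> jm Hs; rewrite -[X in _ <= X]mulr1; apply: EF_le => h.
have [Hd Hd1] := Dn_prop h j jm; rewrite -Hd1 /xa; apply: ler_sum => bb _.
have [_ [_ [Ha _]]] := Hs h; have /andP [_ a1] := Ha bb.
by rewrite -[X in _ <= X]mulr1; apply: ler_wpM2l.
Qed.

End Gen.

Arguments Xj {R m K} v q M sigma T j.
Arguments Pj {R m K} v q M sigma T j.

Lemma delta_ge0 (R : realFieldType) n T (A : bandit_alg R n) (y : 'I_n) delta :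
  is_alg A -> no_regret T A delta -> 0 <= delta.
Proof.
move=> HA NR.
pose rew := fun (_ : unit) (_ : 'I_n) => (0 : R).
pose nxt := fun (_ : unit) (_ : 'I_n) => [:: ((1 : R), tt)].
have Hn : forall s x, nn (nxt s x) /\ wsum (nxt s x) = 1.
  by move=> s x; rewrite /nn /wsum /= ler01 big_seq1.
have H0 : forall k s hh, Dreg A rew nxt y k s hh = 0.
  elim=> // k IH s hh /=; apply: big1 => x _; rewrite Ex1 IH /rew; lra.
have := NR unit rew nxt tt.
have Hr : forall s x, -1 <= rew s x <= 1 by move=> s x; rewrite /rew lerN10 ler01.
have Hn' : forall s x, all (fun ps => 0 <= ps.1) (nxt s x) /\ \sum_(ps <- nxt s x) ps.1 = 1.
  exact: Hn.
move=> /(_ Hr Hn'); apply: le_trans.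
have := @regret_ge R n A unit rew nxt y HA Hn T tt [::] (fun _ => 0) 0.
by rewrite H0 subr0 addr0.
Qed.

Lemma div_help (R : realFieldType) (A d qi qm : R) :
  0 < qm -> qm <= qi -> 0 <= d -> qi * A <= d -> A <= d / qm.
Proof.
move=> qm0 qmi d0 H; rewrite ler_pdivlMr //.
case: (lerP A 0) => HA.
  have : A * qm <= 0 by apply: mulr_le0_ge0 => //; exact: ltW.
  lra.
have : A * qm <= A * qi by apply: ler_wpM2l => //; exact: ltW.
rewrite [A * qi]mulrC; lra.
Qed.

Theorem theoremA1 (R : realFieldType) (m K T : nat) (v q : 'I_m -> R)
    (b : 'I_K.+1 -> R) (M : forall n, bandit_alg R n) (delta : R)
    (sigma : seq (rnd R m K) -> ('I_K.+1 -> R) * ('I_K.+1 -> R))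
    (qmin mye : R) :
  (forall i, 0 <= v i <= 1) ->
  (forall i j : 'I_m, (i < j)%N -> v i < v j) ->
  (forall i, 0 < q i) -> \sum_(i < m) q i = 1 ->
  b ord0 = 0 -> (forall i j : 'I_K.+1, (i < j)%N -> b i < b j) ->
  (forall i, b i <= 1) ->
  (forall h, valid_menu b (sigma h)) ->
  (forall n, (K < n <= K + m)%N -> is_alg (M n) /\ no_regret T (M n) delta) ->
  is_min q qmin ->
  is_Mye v q mye ->
  exp_rev v q M sigma T [::] <= mye * T%:R + m%:R * delta / qmin.
Proof.
move=> Hv Hvinc Hq Hqs Hb0 Hbinc Hb1 Hs HMn [[i1 Eqm] Hmin] [_ Hmye].
have Kn : forall i, (i < m)%N -> (K < (K + i).+1 <= K + m)%N.
  by move=> i im; apply/andP; split; [rewrite ltnS leq_addr | rewrite ltn_add2l].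
have HM : forall i, (i < m)%N -> is_alg (M (K + i).+1).
  by move=> i im; exact: (HMn _ (Kn i im)).1.
have NRi : forall i : 'I_m, no_regret T (M (K + i).+1) delta.
  by move=> i; exact: (HMn _ (Kn i (ltn_ord i))).2.
have Hq0 : forall i, 0 <= q i by move=> i; exact: ltW.
have qmin0 : 0 < qmin by rewrite Eqm.
have d0 : 0 <= delta.
  exact: (@delta_ge0 R _ T (M (K + i1).+1) ord0 delta (HM i1 (ltn_ord i1)) (NRi i1)).
have mye0 : 0 <= mye by have := Hmye 0; rewrite mul0r.
pose X := Xj v q M sigma T; pose Pa := Pj v q M sigma T.
pose eps := delta / qmin.
have eps0 : 0 <= eps by apply: divr_ge0 => //; exact: ltW.
have IR : forall i : 'I_m, Pa i - v i * X i <= eps.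
  move=> i; rewrite /eps /Pa /X; apply: (@div_help R _ delta (q i) qmin qmin0 (Hmin i) d0).
  exact: (@ineq_a R m K v q M sigma HM Hq0 Hqs T delta b i (NRi i) Hv Hb1 Hs).
have IC : forall i j : 'I_m, (j < i)%N -> v i * X j - Pa j - (v i * X i - Pa i) <= eps.
  move=> i j ji; rewrite /eps /Pa /X; apply: (@div_help R _ delta (q i) qmin qmin0 (Hmin i) d0).
  exact: (@ineq_b R m K v q M sigma HM Hq0 Hqs T delta b i j ji (NRi i) Hv Hb1 Hs).
pose vn := fun j => v (insubd i1 j).
pose qn := fun j => q (insubd i1 j).
pose Wn := fun j => vn j * X j - Pa j + (j.+1)%:R * eps.
have vnE : forall i : 'I_m, vn i = v i by move=> i; rewrite /vn valKd.
have qnE : forall i : 'I_m, qn i = q i by move=> i; rewrite /qn valKd.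
have ordE : forall j, (j < m)%N -> {i : 'I_m | j = i}.
  by move=> j jm; exists (Ordinal jm).
have H := @myer R m vn qn X Wn T%:R mye (ler0n _ _) mye0.
have h1 : forall i, (i < m)%N -> 0 <= vn i.
  by move=> j jm; have [i ->] := ordE j jm; rewrite vnE; have /andP [] := Hv i.
have h2 : forall i, (i < m)%N -> 0 <= qn i.
  by move=> j jm; have [i ->] := ordE j jm; rewrite qnE.
have h3 : forall i, (i < m)%N -> X i <= T%:R.
  move=> j jm; rewrite /X -[X in _ <= X]mulr1 mulr1.
  exact: (@Xj_le R m K v q M sigma HM Hq0 Hqs T b j jm Hs).
have h4 : forall i, (i < m)%N -> 0 <= Wn i.
  move=> j jm; have [i ->] := ordE j jm; rewrite /Wn vnE.
  have := IR i; rewrite -nat1r mulrDl mul1r.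
  have : 0 <= (i : nat)%:R * eps by apply: mulr_ge0.
  lra.
have h5 : forall j i, (j < i)%N -> (i < m)%N -> Wn j + (vn i - vn j) * X j <= Wn i.
  move=> j i ji im; have [oi Ei] := ordE i im.
  have jm : (j < m)%N by exact: ltn_trans ji im.
  have [oj Ej] := ordE j jm; subst i j.
  rewrite /Wn !vnE.
  have h := IC oi oj ji.
  have hn : ((oj:nat).+2)%:R * eps <= ((oi:nat).+1)%:R * eps.
    by apply: ler_wpM2r => //; rewrite ler_nat.
  have E : ((oj:nat).+2)%:R = ((oj:nat).+1)%:R + 1 :> R by rewrite natr1.
  rewrite E mulrDl mul1r in hn.
  rewrite mulrBl; lra.
have h6 : forall k, (k < m)%N -> vn k * \sum_(i < m | (k <= i)%N) qn i <= mye.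
  move=> k km; have [ok ->] := ordE k km; rewrite vnE.
  have := Hmye (v ok); rewrite /prob_ge; apply: le_trans.
  apply: ler_wpM2l; first by have /andP [] := Hv ok.
  rewrite le_eqVlt; apply/orP; left; apply/eqP.
  apply: eq_big => i; last by rewrite qnE.
  case: (ltngtP ok i) => oki.
  + by rewrite (ltW (Hvinc _ _ oki)).
  + by rewrite leNgt (Hvinc _ _ oki).
  + by rewrite (_ : i = ok) ?lexx //; apply: val_inj.
have {H} := H h1 h2 h3 h4 h5 h6 => H.
rewrite (@exp_rev_sum R m K v q M sigma T).
have E : \sum_(i < m) qn i * (vn i * X i - Wn i) =
    \sum_(i < m) q i * Pa i - eps * \sum_(i < m) q i * (i : nat).+1%:R.
  rewrite mulr_sumr -sumrB; apply: eq_bigr => i _; rewrite /Wn qnE vnE; ring.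
have S : \sum_(i < m) q i * (i : nat).+1%:R <= m%:R.
  apply: (@le_trans _ _ (\sum_(i < m) q i * m%:R)).
    by apply: ler_sum => i _; apply: ler_wpM2l => //; rewrite ler_nat.
  by rewrite -mulr_suml Hqs mul1r.
have S2 : eps * \sum_(i < m) q i * (i : nat).+1%:R <= eps * m%:R by apply: ler_wpM2l.
have F : mye * T%:R + m%:R * delta / qmin = T%:R * mye + eps * m%:R by rewrite /eps; ring.
rewrite F; rewrite E in H; move: H S2; rewrite /Pa => H S2.
lra.
Qed.
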